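(* There exists a unique algebra homomorphism $\sharp:\Re\to U(\mathfrak{sl}_2)$ that sends \[ A\mapsto \frac{(E+F-2)(E+F+2)}{16},\quad B\mapsto \frac{(H-2)(H+2)}{16},\quad C\mapsto \frac{(\mathbf i E-\mathbf i F-2)(\mathbf i E-\mathbf i F+2)}{16},\quad \Delta\mapsto \frac{(H+2)F^2-(H-2)E^2}{64}. \] Moreover $\sharp(\alpha)=\sharp(\beta)=\sharp(\gamma)=0$ and $\sharp(\delta)=\frac{\Lambda-6}{8}$.
   Context: All algebras are unital associative over $\mathbb C$, homomorphisms are unital, $[x,y]=xy-yx$, and $\mathbf i=\sqrt{-1}$. $U(\mathfrak{sl}_2)$ is the algebra generated by $E,F,H$ with relations $[H,E]=2E$, $[H,F]=-2F$, $[E,F]=H$; its Casimir element is $\Lambda=EF+FE+\frac{H^2}{2}$. The universal Racah algebra $\Re$ is the algebra generated by $A,B,C,\Delta$ with relations $[A,B]=[B,C]=[C,A]=2\Delta$ and such that each of $[A,\Delta]+AC-BA$, $[B,\Delta]+BA-CB$, $[C,\Delta]+CB-AC$ is central in $\Re$. Denote these three central elements by $\alpha,\beta,\gamma$ respectively, and let $\delta=A+B+C$ (which is central in $\Re$). *)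

(* Defs.v *)
From HB Require Import structures.
From mathcomp Require Import all_boot all_order all_algebra.
From mathcomp Require Import complex.
From mathcomp Require Import Rstruct.
Set Implicit Arguments. Unset Strict Implicit. Unset Printing Implicit Defensive.
Import Order.TTheory GRing.Theory Num.Theory.
Local Open Scope ring_scope.

Notation Cx := (complex Rdefinitions.R).

Definition commr {T : pzRingType} (x y : T) : T := x * y - y * x.

Definition sl2_rel (T : algType Cx) (e f h : T) : Prop :=
  [/\ commr h e = e *+ 2, commr h f = - (f *+ 2) & commr e f = h].

Definition unique_hom_on {S T : algType Cx} (P : (S -> T) -> Prop)
  (phi : {lrmorphism S -> T}) : Prop :=
  P phi /\ forall psi : {lrmorphism S -> T}, P psi -> forall x, psi x = phi x.

(* (U, E, F, H) is the universal enveloping algebra U(sl_2): generated by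
   E, F, H subject to the sl_2 relations (universal property of the
   presentation). *)
Definition is_Usl2 (U : algType Cx) (E F H : U) : Prop :=
  sl2_rel E F H /\
  forall (T : algType Cx) (e f h : T), sl2_rel e f h ->
    exists phi : {lrmorphism U -> T},
      unique_hom_on (fun g => [/\ g E = e, g F = f & g H = h]) phi.

Definition Casimir {U : algType Cx} (E F H : U) : U :=
  E * F + F * E + (2^-1 : Cx) *: (H ^+ 2).

Definition racah_alpha {T : pzRingType} (a b c d : T) : T := commr a d + a * c - b * a.
Definition racah_beta  {T : pzRingType} (a b c d : T) : T := commr b d + b * a - c * b.
Definition racah_gamma {T : pzRingType} (a b c d : T) : T := commr c d + c * b - a * c.
Definition racah_delta {T : pzRingType} (a b c d : T) : T := a + b + c.

Definition comm_gens {T : pzRingType} (x a b c d : T) : Prop :=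
  [/\ commr x a = 0, commr x b = 0, commr x c = 0 & commr x d = 0].

Definition racah_rel (T : algType Cx) (a b c d : T) : Prop :=
  [/\ commr a b = d *+ 2, commr b c = d *+ 2 & commr c a = d *+ 2] /\
  [/\ comm_gens (racah_alpha a b c d) a b c d,
      comm_gens (racah_beta a b c d) a b c d &
      comm_gens (racah_gamma a b c d) a b c d].

(* (Re, A, B, C, D) is the universal Racah algebra: generated by A, B, C, D
   subject to the Racah relations (universal property of the presentation). *)
Definition is_Racah (Re : algType Cx) (A B C D : Re) : Prop :=
  racah_rel A B C D /\
  forall (T : algType Cx) (a b c d : T), racah_rel a b c d ->
    exists phi : {lrmorphism Re -> T},
      unique_hom_on (fun g => [/\ g A = a, g B = b, g C = c & g D = d]) phi.

(* Main.v *)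
Require Import Defs.
From HB Require Import structures.
From mathcomp Require Import all_boot all_order all_algebra.
From mathcomp Require Import complex Rstruct.
Import GRing.Theory.
Local Open Scope ring_scope.
Local Open Scope complex_scope.
From mathcomp Require Import ring.
Import Num.Theory.
Inductive letter := LF | LH | LE.
Definition word := seq letter.
Definition poly := seq (int * word).

Definition evl {U : pzRingType} (E F H : U) l := match l with LF => F | LH => H | LE => E end.
Definition evw {U : pzRingType} (E F H : U) (w : word) : U :=
  foldr (fun l acc => evl E F H l * acc) 1 w.
Definition evp {U : pzRingType} (E F H : U) (p : poly) : U :=
  foldr (fun m acc => evw E F H m.2 *~ m.1 + acc) 0 p.

Definition swap (x y : letter) (r : word) : option poly :=
  match x, y with
  | LH, LF => Some [:: (Posz 1, LF :: LH :: r); (Negz 1, LF :: r)]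
  | LE, LF => Some [:: (Posz 1, LF :: LE :: r); (Posz 1, LH :: r)]
  | LE, LH => Some [:: (Posz 1, LH :: LE :: r); (Negz 1, LE :: r)]
  | _, _ => None
  end.

Fixpoint step_word (w : word) : option poly :=
  match w with
  | x :: ((y :: r) as t) =>
      match swap x y r with
      | Some q => Some q
      | None => omap (map (fun m => (m.1, x :: m.2))) (step_word t)
      end
  | _ => None
  end.

Definition scalep (c : int) (p : poly) : poly := map (fun m => (c * m.1, m.2)) p.

Fixpoint nf_word (n : nat) (w : word) : poly :=
  match n with
  | 0 => [:: (Posz 1, w)]
  | S n => match step_word w with
           | Some q => flatten (map (fun m => scalep m.1 (nf_word n m.2)) q)
           | None => [:: (Posz 1, w)]
           end
  end.

Definition leqb (a b : letter) := match a, b with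
  | LF, LF | LH, LH | LE, LE => true | _, _ => false end.
Fixpoint weq (w1 w2 : word) : bool :=
  match w1, w2 with
  | [::], [::] => true
  | a :: r, b :: s => leqb a b && weq r s
  | _, _ => false end.
Fixpoint ins (m : int * word) (p : poly) : poly :=
  match p with
  | [::] => [:: m]
  | m' :: r => if weq m.2 m'.2 then (m.1 + m'.1, m'.2) :: r else m' :: ins m r
  end.
Definition collect (p : poly) := foldr ins [::] p.
Definition isz (z : int) := match z with Posz 0 => true | _ => false end.
Definition nfp (n : nat) (p : poly) : poly :=
  filter (fun m => ~~ isz m.1)
   (collect (flatten (map (fun m => scalep m.1 (nf_word n m.2)) p))).

Inductive expr := X of letter | K of int | Add of expr & expr | Sub of expr & expr
  | Mul of expr & expr | Opp of expr | Nm of expr & nat.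

Fixpoint eve {U : pzRingType} (E F H : U) (e : expr) : U :=
  match e with
  | X l => evl E F H l
  | K z => 1 *~ z
  | Add a b => eve E F H a + eve E F H b
  | Sub a b => eve E F H a - eve E F H b
  | Mul a b => eve E F H a * eve E F H b
  | Opp a => - eve E F H a
  | Nm a n => eve E F H a *+ n
  end.

Definition pmul (p q : poly) : poly :=
  flatten (map (fun m1 => map (fun m2 => (m1.1 * m2.1, m1.2 ++ m2.2)) q) p).

Fixpoint to_poly (e : expr) : poly :=
  match e with
  | X l => [:: (Posz 1, [:: l])]
  | K z => [:: (z, [::])]
  | Add a b => to_poly a ++ to_poly b
  | Sub a b => to_poly a ++ scalep (Negz 0) (to_poly b)
  | Mul a b => pmul (to_poly a) (to_poly b)
  | Opp a => scalep (Negz 0) (to_poly a)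
  | Nm a n => scalep (Posz n) (to_poly a)
  end.

Section Sound.
Variables (U : pzRingType) (E F H : U).
Hypothesis hHE : H * E - E * H = E *+ 2.
Hypothesis hHF : H * F - F * H = - (F *+ 2).
Hypothesis hEF : E * F - F * E = H.

Lemma evp_cat p q : evp E F H (p ++ q) = evp E F H p + evp E F H q.
Proof. by elim: p => [|m p IH] /=; rewrite ?add0r // IH addrA. Qed.

Lemma evp_scale c p : evp E F H (scalep c p) = evp E F H p *~ c.
Proof.
elim: p => [|m p IH] /=; first by rewrite mul0rz.
by rewrite IH mulrzDl [c * _]mulrC mulrzA.
Qed.

Lemma evp_cons x q : evp E F H (map (fun m => (m.1, x :: m.2)) q) = evl E F H x * evp E F H q.
Proof.
elim: q => [|m q IH] /=; first by rewrite mulr0.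
by rewrite IH mulrDr mulrzAr.
Qed.

Lemma swap_sound x y r q : swap x y r = Some q ->
  evp E F H q = evl E F H x * (evl E F H y * evw E F H r).
Proof.
have eHF : H * F = F * H - F *+ 2 by rewrite -[H * F](subrK (F * H)) hHF addrC.
have eEF : E * F = F * E + H by rewrite -[E * F](subrK (F * E)) hEF addrC.
have eEH : E * H = H * E - E *+ 2.
  by rewrite -[E * H](subrK (H * E)) -opprB hHE addrC.
case: x; case: y => //= [] [<-] /=; rewrite !mulr1z addr0 !mulrA.
- by rewrite eHF mulrBl mulrnAl.
- by rewrite eEF mulrDl.
- by rewrite eEH mulrBl mulrnAl.
Qed.

Lemma step_sound w q : step_word w = Some q -> evp E F H q = evw E F H w.
Proof.
elim: w q => [|x w IH] q //=.
case: w IH => [|y r] IH //.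
case Hs: (swap x y r) => [q'|].
  by move=> [<-]; rewrite (swap_sound _ _ _ _ Hs).
case Hst: (step_word (y :: r)) => [q'|] //= [<-].
by rewrite evp_cons (IH _ Hst).
Qed.

Lemma nf_word_sound n w : evp E F H (nf_word n w) = evw E F H w.
Proof.
elim: n w => [|n IH] w /=; first by rewrite ?mulr1z ?addr0.
case Hs: (step_word w) => [q|]; last by rewrite /= ?mulr1z ?addr0.
rewrite -(step_sound _ _ Hs).
elim: q {Hs} => [|m q IHq] //=.
by rewrite evp_cat IHq evp_scale IH.
Qed.

Lemma weqP w1 w2 : weq w1 w2 -> w1 = w2.
Proof.
elim: w1 w2 => [|a w1 IH] [|b w2] //=.
by case/andP; case: a; case: b => //= _ /IH ->.
Qed.

Lemma ins_sound m p : evp E F H (ins m p) = evw E F H m.2 *~ m.1 + evp E F H p.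
Proof.
elim: p => [|m' p IH] //=.
case: ifP => [/weqP ->|_] /=.
  by rewrite mulrzDr addrA.
by rewrite IH addrCA.
Qed.

Lemma collect_sound p : evp E F H (collect p) = evp E F H p.
Proof. by elim: p => [|m p IH] //=; rewrite ins_sound IH. Qed.

Lemma filter_sound p : evp E F H (filter (fun m => ~~ isz m.1) p) = evp E F H p.
Proof.
elim: p => [|[c w] p IH] //=.
case: c => [[|n]|n] //=; rewrite IH //.
by rewrite mulr0z add0r.
Qed.

Lemma nfp_sound n p : evp E F H (nfp n p) = evp E F H p.
Proof.
rewrite /nfp filter_sound collect_sound.
elim: p => [|m p IH] //=.
by rewrite evp_cat IH evp_scale nf_word_sound.
Qed.

Lemma evw_cat w1 w2 : evw E F H (w1 ++ w2) = evw E F H w1 * evw E F H w2.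
Proof. by elim: w1 => [|l w1 IH] /=; rewrite ?mul1r // IH mulrA. Qed.

Lemma pmul1_sound c1 w1 q : evp E F H (map (fun m2 => (c1 * m2.1, w1 ++ m2.2)) q)
  = (evw E F H w1 *~ c1) * evp E F H q.
Proof.
elim: q => [|[c2 w2] q IHq] /=; first by rewrite mulr0.
rewrite IHq mulrDr; congr (_ + _).
by rewrite evw_cat mulrzAl mulrzAr -mulrzA mulrC.
Qed.

Lemma pmul_sound p q : evp E F H (pmul p q) = evp E F H p * evp E F H q.
Proof.
elim: p => [|[c1 w1] p IH] /=; first by rewrite mul0r.
by rewrite evp_cat IH mulrDl pmul1_sound.
Qed.

Lemma to_poly_sound e : evp E F H (to_poly e) = eve E F H e.
Proof.
elim: e => [l|z|a IHa b IHb|a IHa b IHb|a IHa b IHb|a IHa|a IHa n] /=.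
- by rewrite mulr1 mulr1z addr0.
- by rewrite addr0.
- by rewrite evp_cat IHa IHb.
- by rewrite evp_cat evp_scale IHa IHb mulrN1z.
- by rewrite pmul_sound IHa IHb.
- by rewrite evp_scale IHa mulrN1z.
- by rewrite evp_scale IHa.
Qed.

Lemma reflect_eq e1 e2 : nfp 60 (to_poly (Sub e1 e2)) = [::] ->
  eve E F H e1 = eve E F H e2.
Proof.
move=> h; apply/eqP; rewrite -subr_eq0; apply/eqP.
change (eve E F H (Sub e1 e2) = 0).
by rewrite -(to_poly_sound (Sub e1 e2)) -(nfp_sound 60) h.
Qed.
End Sound.

Ltac reify E F H t :=
  lazymatch t with
  | E => constr:(X LE)
  | F => constr:(X LF)
  | H => constr:(X LH)
  | ?a - ?b => let x := reify E F H a in let y := reify E F H b in constr:(Sub x y)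
  | ?a + ?b => let x := reify E F H a in let y := reify E F H b in constr:(Add x y)
  | - ?a => let x := reify E F H a in constr:(Opp x)
  | ?a * ?b => let x := reify E F H a in let y := reify E F H b in constr:(Mul x y)
  | ?a ^+ 2 => let x := reify E F H a in constr:(Mul x x)
  | 0 => constr:(K 0)
  | 1 => constr:(K 1)
  | ?n%:R => constr:(K (Posz n))
  | ?a *+ ?n => let x := reify E F H a in constr:(Nm x n)
  end.

Ltac ncring E F H hHE hHF hEF :=
  lazymatch goal with |- ?l = ?r =>
    let x := reify E F H l in let y := reify E F H r in
    change (eve E F H x = eve E F H y);
    apply: (@reflect_eq _ E F H hHE hHF hEF); vm_compute; reflexivity
  end.

Lemma ii : ('i * 'i : Cx) = -1.
Proof.
apply/eqP; rewrite eq_complex /=.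
by rewrite !(mul0r, mulr0, mul1r, subr0, add0r, addr0, eqxx, oppr0).
Qed.

Lemma sc_mul (U : algType Cx) (k l : Cx) (x y : U) :
  (k *: x) * (l *: y) = (k * l) *: (x * y).
Proof. by rewrite -scalerAl -scalerAr scalerA. Qed.

Lemma L1 (V : lmodType Cx) (x y : V) (k1 k2 k3 k4 : Cx) :
  k1 + k3 = 0 -> k2 - k4 = 0 -> k1 *: x + k2 *: y + k3 *: x - k4 *: y = 0.
Proof.
move=> h1 h2; rewrite [_ + k3 *: x]addrAC -scalerDl h1 scale0r add0r -scalerBl h2.
by rewrite scale0r.
Qed.



Lemma L3 (V : lmodType Cx) (x y : V) (k1 k2 k3 k4 : Cx) :
  k1 - k4 = 0 -> k2 + k3 = 0 -> k1 *: x + k2 *: y + k3 *: y - k4 *: x = 0.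
Proof.
move=> h1 h2; rewrite -(addrA (k1 *: x)) -scalerDl h2 scale0r addr0 -scalerBl h1.
by rewrite scale0r.
Qed.

Theorem theorem1p3
  (Re : algType Cx) (A B C D : Re) (HRe : is_Racah A B C D)
  (U : algType Cx) (E F H : U) (HU : is_Usl2 E F H) :
  exists sharp : {lrmorphism Re -> U},
    unique_hom_on (fun g =>
      [/\ g A = (16^-1 : Cx) *: ((E + F - 2) * (E + F + 2)),
          g B = (16^-1 : Cx) *: ((H - 2) * (H + 2)),
          g C = (16^-1 : Cx) *: (('i *: E - 'i *: F - 2) * ('i *: E - 'i *: F + 2))
        & g D = (64^-1 : Cx) *: ((H + 2) * F ^+ 2 - (H - 2) * E ^+ 2)]) sharp
    /\ sharp (racah_alpha A B C D) = 0
    /\ sharp (racah_beta A B C D) = 0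
    /\ sharp (racah_gamma A B C D) = 0
    /\ sharp (racah_delta A B C D) = (8^-1 : Cx) *: (Casimir E F H - 6).
Proof.
case: HU => [[hHE hHF hEF] _]; rewrite /commr in hHE hHF hEF.
pose a0 := (E + F - 2) * (E + F + 2).
pose b0 := (H - 2) * (H + 2).
pose c0 := (E - F) * (E - F) + 4.
pose d0 := (H + 2) * (F * F) - (H - 2) * (E * E).
have t1 : a0 * b0 - b0 * a0 = d0 *+ 8.
  rewrite /a0 /b0 /d0; ncring E F H hHE hHF hEF.
have t2 : b0 * c0 - c0 * b0 = - (d0 *+ 8).
  rewrite /c0 /b0 /d0; ncring E F H hHE hHF hEF.
have t3 : c0 * a0 - a0 * c0 = - (d0 *+ 8).
  rewrite /c0 /a0 /d0; ncring E F H hHE hHF hEF.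
have t4 : a0 * d0 - d0 * a0 = (a0 * c0 + b0 * a0) *+ 4.
  rewrite /c0 /a0 /b0 /d0; ncring E F H hHE hHF hEF.
have t5 : b0 * d0 - d0 * b0 = - ((b0 * a0 + c0 * b0) *+ 4).
  rewrite /c0 /a0 /b0 /d0; ncring E F H hHE hHF hEF.
have t6 : c0 * d0 - d0 * c0 = (a0 * c0 - c0 * b0) *+ 4.
  rewrite /c0 /a0 /b0 /d0; ncring E F H hHE hHF hEF.
have t7 : a0 + b0 - c0 = E * F *+ 2 + F * E *+ 2 + H * H - 12.
  rewrite /c0 /a0 /b0; ncring E F H hHE hHF hEF.
have ec : ('i *: E - 'i *: F - 2) * ('i *: E - 'i *: F + 2) = - c0.
  rewrite -scalerBr mulrDr !mulrBl sc_mul ii scaleN1r mulr_natr mulr_natl -natrM.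
  by rewrite addrA subrK /c0 [- (_ + 4)]opprD.
set s := (16^-1 : Cx); set t := (64^-1 : Cx).
have ed : (H + 2) * F ^+ 2 - (H - 2) * E ^+ 2 = d0 by [].
rewrite ec ed -/a0 -/b0.
have eC : s *: - c0 = (- s) *: c0 by rewrite scalerN scaleNr.
rewrite eC.
set a := s *: a0; set b := s *: b0; set c := (- s) *: c0; set d := t *: d0.
have r1 : commr a b = d *+ 2.
  rewrite /commr !sc_mul -scalerBr t1 -[d0 *+ 8]scaler_nat -[d *+ 2]scaler_nat /d !scalerA.
  by congr (_ *: _); rewrite /s /t; field.
have r2 : commr b c = d *+ 2.
  rewrite /commr !sc_mul mulrN mulNr -scalerBr t2 -[d0 *+ 8]scaler_nat -[d *+ 2]scaler_nat /d.
  rewrite scalerN -scaleNr !scalerA.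
  by congr (_ *: _); rewrite /s /t; field.
have r3 : commr c a = d *+ 2.
  rewrite /commr !sc_mul mulrN mulNr -scalerBr t3 -[d0 *+ 8]scaler_nat -[d *+ 2]scaler_nat /d.
  rewrite scalerN -scaleNr !scalerA.
  by congr (_ *: _); rewrite /s /t; field.
have al : racah_alpha a b c d = 0.
  rewrite /racah_alpha /commr !sc_mul [t * s]mulrC -scalerBr t4.
  rewrite -[(_ + _) *+ 4]scaler_nat scalerA scalerDr.
  by apply: L1; rewrite /s /t; field.
have be : racah_beta a b c d = 0.
  rewrite /racah_beta /commr !sc_mul [t * s]mulrC -scalerBr t5.
  rewrite -[(_ + _) *+ 4]scaler_nat scalerN scalerA -scaleNr scalerDr.
  by apply: L1; rewrite /s /t; field.
have ga : racah_gamma a b c d = 0.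
  rewrite /racah_gamma /commr !sc_mul [t * - s]mulrC -scalerBr t6.
  rewrite -[(_ - _) *+ 4]scaler_nat scalerA scalerBr.
  rewrite -scaleNr.
  by apply: L3; rewrite /s /t; field.
have de : racah_delta a b c d = (8^-1 : Cx) *: (Casimir E F H - 6).
  rewrite /racah_delta /a /b /c scaleNr -scalerN -!scalerDr t7 /Casimir.
  have h2 : (2^-1 : Cx) *+ 2 = 1.
    by field.
  have h12 : (6 : U) *+ 2 = 12 by rewrite -mulrnA.
  have e2 : E * F *+ 2 + F * E *+ 2 + H * H - 12 =
            (E * F + F * E + (2^-1 : Cx) *: H ^+ 2 - 6) *+ 2.
    by rewrite !mulrnDl scalerMnl h2 scale1r mulNrn h12 expr2.
  rewrite e2 -[(_ - 6) *+ 2]scaler_nat scalerA.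
  by congr (_ *: _); rewrite /s; field.
have cg0 : forall x y z w : U, comm_gens 0 x y z w.
  by move=> x y z w; split; rewrite /commr mul0r mulr0 subrr.
have rr : racah_rel a b c d.
  by split; [split|rewrite al be ga; split].
case: HRe => _ /(_ U _ _ _ _ rr) [phi [[pA pB pC pD] uq]].
exists phi; split; first by split.
rewrite /racah_alpha /racah_beta /racah_gamma /racah_delta /commr.
rewrite !rmorphB !rmorphD !rmorphN !rmorphM.
have eqf : forall x, GRing.RMorphism.sort (GRing_LRMorphism__to__GRing_RMorphism phi) x = phi x by [].
rewrite !eqf pA pB pC pD.
by split; [exact: al|split; [exact: be|split; [exact: ga|exact: de]]].
Qed.
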